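(* Let $\lambda\in\mathbf{C}$ with $\lambda\neq 0$ and $\lambda\neq1$. For every $n\in\mathbf{Z}_{+}$ (nonnegative integers), \[ \lambda H_{n}(x\vert\lambda^{-1})+H_{n}(x\vert\lambda)=(1+\lambda)\sum_{k=0}^{n}\binom{n}{k}H_{n-k}(\lambda^{-1})H_{k}(x\vert\lambda). \]
   Context: For $\mu\in\mathbf{C}$, $\mu\neq1$, the Frobenius–Euler polynomials $H_n(x\vert\mu)$ are defined by the generating function $\frac{1-\mu}{e^{t}-\mu}e^{xt}=\sum_{n=0}^{\infty}H_{n}(x\vert\mu)\frac{t^{n}}{n!}$, and the Frobenius–Euler numbers are $H_n(\mu)=H_n(0\vert\mu)$. *)

(* Defs.v *)
(* Complex numbers are modelled as R[i] for an arbitrary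
   real-number model R : realType (e.g. Stdlib's R). *)
From mathcomp Require Import all_boot all_order all_algebra.
From mathcomp Require Import complex.
From mathcomp Require Import reals.
Set Implicit Arguments. Unset Strict Implicit. Unset Printing Implicit Defensive.
Import Order.TTheory GRing.Theory Num.Theory.
Local Open Scope ring_scope.

(* Frobenius-Euler polynomials H_n(x | mu), mu <> 1, defined by
     (1 - mu) / (e^t - mu) * e^{xt} = sum_n H_n(x|mu) t^n / n!.
   Multiplying by (e^t - mu) and comparing coefficients of t^n/n! on both
   sides, the generating function is equivalent to
     sum_{k=0}^{n} C(n,k) H_k(x|mu) - mu H_n(x|mu) = (1 - mu) x^n,
   i.e. H_n = x^n - (1-mu)^{-1} sum_{k<n} C(n,k) H_k. *)
Fixpoint FE_list (F : fieldType) (mu x : F) (n : nat) : seq F :=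
  match n with
  | 0 => [:: 1]
  | n'.+1 =>
      let s := FE_list mu x n' in
      rcons s (x ^+ n - (1 - mu)^-1 * \sum_(k < n) ('C(n, k))%:R * s`_k)
  end.

Definition FE_poly (F : fieldType) (mu x : F) (n : nat) : F :=
  (FE_list mu x n)`_n.

Definition FE_num (F : fieldType) (mu : F) (n : nat) : F := FE_poly mu 0 n.

(* Main.v *)
Require Import Defs.
From mathcomp Require Import all_boot all_order all_algebra.
From mathcomp Require Import complex.
From mathcomp Require Import reals.
From mathcomp.algebra_tactics Require Import ring.
Import Order.TTheory GRing.Theory Num.Theory.
Local Open Scope ring_scope.

Section Gen.
Variable F : fieldType.

Lemma FE_list_size (mu x : F) m : size (FE_list mu x m) = m.+1.
Proof. by elim: m => [|m IH] //=; rewrite size_rcons IH. Qed.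

Lemma FE_list_nth (mu x : F) m k : (k <= m)%N -> (FE_list mu x m)`_k = FE_poly mu x k.
Proof.
elim: m => [|m IH]; first by rewrite leqn0 => /eqP ->.
rewrite leq_eqVlt => /orP [/eqP -> //|Hk].
by rewrite /= nth_rcons FE_list_size Hk IH.
Qed.

Lemma FE_rec (mu x : F) m : mu != 1 ->
  \sum_(k < m.+1) ('C(m, k))%:R * FE_poly mu x k - mu * FE_poly mu x m
  = (1 - mu) * x ^+ m.
Proof.
move=> Hmu; have Hm : 1 - mu != 0 by rewrite subr_eq0 eq_sym.
case: m => [|m].
  by rewrite big_ord1 /FE_poly /= bin0 expr0 !mulr1.
rewrite big_ord_recr /= binn mul1r.
have -> : FE_poly mu x m.+1 = x ^+ m.+1 - (1 - mu)^-1 *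
   \sum_(k < m.+1) ('C(m.+1, k))%:R * FE_poly mu x k.
  rewrite {1}/FE_poly /= nth_rcons FE_list_size ltnn eqxx.
  congr (_ - _ * _); apply: eq_bigr => k _.
  by rewrite FE_list_nth // -ltnS.
set S := \sum_(k < m.+1) _.
field. exact: Hm.
Qed.

Lemma fact_neq0 n : (n`!)%:R != 0 :> F -> True. Proof. by []. Qed.

End Gen.

Section Main.
Variable R : realType.
Local Notation C := (R[i]).

Lemma factC_neq0 n : (n`!)%:R != 0 :> C.
Proof. by rewrite pnatr_eq0 -lt0n fact_gt0. Qed.

Variable N : nat.

Definition P (a : nat -> C) : {poly C} := \poly_(i < N.+1) (a i / (i`!)%:R).

Lemma coefP a i : (i <= N)%N -> (P a)`_i = a i / (i`!)%:R.
Proof. by move=> Hi; rewrite coef_poly ltnS Hi. Qed.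

Lemma convP a b i : (i <= N)%N ->
  (P a * P b)`_i = (\sum_(j < i.+1) ('C(i, j))%:R * a j * b (i - j)%N) / (i`!)%:R.
Proof.
move=> Hi; rewrite coefM mulr_suml; apply: eq_bigr => [[j Hj]] _ /=.
have Hji : (j <= i)%N by rewrite -ltnS.
rewrite !coefP ?(leq_trans (leq_subr _ _) Hi) ?(leq_trans Hji Hi) //.
have := bin_fact Hji => /(congr1 (fun n => n%:R : C)).
rewrite !natrM => <-.
have := factC_neq0 j; have := factC_neq0 (i - j).
have : ('C(i, j))%:R != 0 :> C by rewrite pnatr_eq0 -lt0n bin_gt0.
move=> H1 H2 H3; field; by rewrite H1 H2 H3.
Qed.

Definition d : {poly C} := 'X^(N.+1).

Lemma dvd_coef (p : {poly C}) : (forall i, (i <= N)%N -> p`_i = 0) -> d %| p.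
Proof.
move=> H; apply/modp_eq0P; rewrite /d -Pdiv.IdomainMonic.take_poly_modp.
apply/polyP => i; rewrite coef_take_poly coef0.
by case: ifP => // Hi; apply: H; rewrite -ltnS.
Qed.

Lemma coef_dvd (p : {poly C}) : d %| p -> p`_N = 0.
Proof.
by case/dvdpP => q ->; rewrite /d coefMXn ltnSn.
Qed.

Definition E := P (fun _ => 1).

Lemma gen_rec (a g : nat -> C) (al be ga : C) :
  (forall i, al * \sum_(k < i.+1) ('C(i, k))%:R * a k - be * a i = ga * g i) ->
  d %| P a * (al%:P * E - be%:P) - ga%:P * P g.
Proof.
move=> H; apply: dvd_coef => i Hi.
rewrite coefB mulrBr coefB mulrCA !coefCM coefMC /E convP // !coefP //.
under eq_bigr => k _ do rewrite mulr1.
have := H i; have := factC_neq0 i.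
set S := \sum_(k < i.+1) _ => Hf Hi'.
transitivity ((al * S - be * a i - ga * g i) / (i`!)%:R).
  by field; rewrite Hf.
by rewrite Hi' subrr mul0r.
Qed.

Lemma cop (Q : {poly C}) : Q`_0 != 0 -> coprimep d Q.
Proof.
move=> HQ; rewrite /d; apply: coprimep_expl.
rewrite coprimep_sym -[X in coprimep _ X]subr0 -polyC0 coprimep_XsubC.
by rewrite /root horner_coef0.
Qed.

Lemma E0 : E`_0 = 1.
Proof. by rewrite /E coefP // divr1. Qed.

Lemma PZ : P (fun k => 0 ^+ k) = 1.
Proof.
apply/polyP => i; rewrite coef_poly coef1.
case: i => [|i] /=; first by rewrite expr0 divr1.
by rewrite expr0n /= mul0r; case: ifP.
Qed.
End Main.

Theorem theorem2 (R : realType) (lam x : R[i]) (n : nat) :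
  lam != 0 -> lam != 1 ->
  lam * FE_poly lam^-1 x n + FE_poly lam x n =
  (1 + lam) * \sum_(k < n.+1)
      ('C(n, k))%:R * FE_num lam^-1 (n - k) * FE_poly lam x k.
Proof.
move=> Hl0 Hl1.
have Hli : lam^-1 != 1 by rewrite invr_eq1.
pose A k := FE_poly lam x k; pose Cc k := FE_poly lam^-1 x k.
pose B k := FE_num lam^-1 k.
pose PA := P R n A; pose PB := P R n B; pose PC := P R n Cc.
pose PX := P R n (fun k => x ^+ k).
pose l : {poly R[i]} := lam%:P.
pose EE := E R n.
have h1 : d R n %| PA * (EE - l) - (1 - l) * PX.
  have := @gen_rec R n A (fun k => x ^+ k) 1 lam (1 - lam).
  rewrite polyC1 mul1r polyCB polyC1; apply => i.
  by rewrite mul1r FE_rec.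
have h2 : d R n %| PC * (l * EE - 1) - (l - 1) * PX.
  have := @gen_rec R n Cc (fun k => x ^+ k) lam 1 (lam - 1).
  rewrite polyC1 polyCB polyC1; apply => i.
  have e := FE_rec _ _ x i Hli.
  transitivity (lam * (\sum_(k < i.+1) ('C(i, k))%:R * Cc k - lam^-1 * Cc i)).
    by field; exact: Hl0.
  rewrite /Cc e; field; exact: Hl0.
have h3 : d R n %| PB * (l * EE - 1) - (l - 1).
  have := @gen_rec R n B (fun k => 0 ^+ k) lam 1 (lam - 1).
  rewrite polyC1 polyCB polyC1 PZ mulr1; apply => i.
  have e := FE_rec _ _ 0 i Hli.
  transitivity (lam * (\sum_(k < i.+1) ('C(i, k))%:R * B k - lam^-1 * B i)).
    by field; exact: Hl0.
  rewrite /B /FE_num e; field; exact: Hl0.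
have c1 : coprimep (d R n) (l * EE - 1).
  apply: cop; rewrite coefB coefCM E0 coef1 /= mulr1 subr_eq0 //.
have c2 : coprimep (d R n) (EE - l).
  apply: cop; rewrite coefB coefC E0 /= subr_eq0 eq_sym //.
have h4 : d R n %| PB * PX - PC.
  rewrite -(Gauss_dvdpl _ c1).
  have -> : (PB * PX - PC) * (l * EE - 1) =
     PX * (PB * (l * EE - 1) - (l - 1)) - (PC * (l * EE - 1) - (l - 1) * PX) by ring.
  by apply: dvdp_sub => //; apply: dvdp_mull.
have h5 : d R n %| (lam%:P * PC + PA) - (1 + lam)%:P * (PA * PB).
  rewrite -(Gauss_dvdpl _ c2) polyCD polyC1 -/l.
  have -> : (l * PC + PA - (1 + l) * (PA * PB)) * (EE - l) =
     (PC * (l * EE - 1) - (l - 1) * PX) + (PA * (EE - l) - (1 - l) * PX)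
     - (1 + l) * PB * (PA * (EE - l) - (1 - l) * PX)
     - (1 + l) * (1 - l) * (PB * PX - PC) by ring.
  by repeat apply: dvdp_sub; try apply: dvdp_add; try apply: dvdp_mull.
have e := coef_dvd _ _ _ h5.
rewrite coefB coefD !coefCM convP // !coefP // in e.
have Hf := factC_neq0 R n.
set S := \sum_(j < n.+1) _ in e.
have -> : \sum_(k < n.+1) ('C(n, k))%:R * FE_num lam^-1 (n - k) * FE_poly lam x k = S.
  by apply: eq_bigr => k _; rewrite mulrAC.
apply/eqP; rewrite -subr_eq0; apply/eqP.
transitivity ((n`!)%:R * (lam * (Cc n / (n`!)%:R) + A n / (n`!)%:R - (1 + lam) * (S / (n`!)%:R))).
  by rewrite /Cc /A; field; exact: Hf.
by rewrite e mulr0.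
Qed.
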